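(* There exists $n_0$ such that for all integers $n>n_0$: $$\langle \ell_n\alpha\rangle=3A\langle k_n\theta\rangle\quad\text{and}\quad\langle\ell_n\alpha^2\rangle=\langle k_n\theta^2\rangle-2B\langle k_n\theta\rangle.$$
   Context: Let $f(x)=Ax^3+Bx^2+Cx+D\in\mathbb{Z}[x]$ be irreducible with $A>0$, having exactly one real root $\alpha$. Put $p=3(B^2-3AC)$, $q=-2B^3+9ABC-27A^2D$, so that $27A^2f\!\left(\frac{x-B}{3A}\right)=x^3-px-q$, and put $\theta=3A\alpha+B$, the unique real root of $x^3-px-q$. Let $K=\mathbb{Q}(\theta)=\mathbb{Q}(\alpha)\subset\mathbb{R}$ with ring of integers $\mathcal{O}_K$, let $d$ be a positive integer with $\mathcal{O}_K\subseteq\frac1d\mathbb{Z}[\theta]$, and let $\lambda\in\mathcal{O}_K$ be a unit with $\lambda>1$. Define rationals $a_n,b_n,c_n$ by $a_n+b_n\theta+c_n\theta^2=\lambda^n$, and $k_n=dc_n$, $\ell_n=9A^2k_n$. For $x\in\mathbb{R}$, $\langle x\rangle=x-\lfloor x+\tfrac12\rfloor$. *)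

(* Defs.v *)
From HB Require Import structures.
From mathcomp Require Import all_boot all_order all_algebra.
From Stdlib Require Import Reals QArith Qreals.

Set Implicit Arguments.
Unset Strict Implicit.
Unset Printing Implicit Defensive.

Definition intR (z : int) : R :=
  match z with
  | Posz n => INR n
  | Negz n => (- INR (S n))%R
  end.

Definition peval (p : {poly int}) (x : R) : R :=
  foldr (fun c acc => (intR c + x * acc)%R) 0%R (polyseq p).

Section CubicDef.
Local Open Scope ring_scope.
Definition cubic (A B C D : int) : {poly int} :=
  A%:P * 'X^3 + B%:P * 'X^2 + C%:P * 'X + D%:P.
End CubicDef.

Section IrrDef.
Local Open Scope ring_scope.
Definition Zirreducible (f : {poly int}) : Prop :=
  f != 0 /\ ~~ (f \is a GRing.unit) /\
  (forall g h : {poly int}, f = g * h ->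
     g \is a GRing.unit \/ h \is a GRing.unit).
End IrrDef.

Definition alg_int (x : R) : Prop :=
  exists p : {poly int}, p \is monic /\ peval p x = 0%R.

Definition inK (theta x : R) : Prop :=
  exists a b c : Q, x = (Q2R a + Q2R b * theta + Q2R c * theta ^ 2)%R.

(* floor on R, via Stdlib's up: up x is the integer with x < up x <= x + 1 *)
Definition Rfloor (x : R) : Z := (up x - 1)%Z.

Definition nearfrac (x : R) : R := (x - IZR (Rfloor (x + / 2)))%R.

(* Main.v *)
Require Import Defs.
From HB Require Import structures.
From mathcomp Require Import all_boot all_order all_algebra.
From Stdlib Require Import Reals QArith Qreals Lra Lia Psatz ZArith.
From mathcomp Require Import Rstruct.
From mathcomp Require ring.
Import Order.TTheory GRing.Theory Num.Theory.

Section MC.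
Local Open Scope ring_scope.
Lemma intRE (z : int) : intR z = (z%:~R : R).
Proof.
case: z => n; rewrite /intR INRE; first by [].
by rewrite NegzE mulrNz RoppE.
Qed.
End MC.

Lemma intR_add x y : intR (x + y) = Rplus (intR x) (intR y).
Proof. by rewrite !intRE rmorphD. Qed.
Lemma intR_mul x y : intR (x * y) = Rmult (intR x) (intR y).
Proof. by rewrite !intRE rmorphM. Qed.
Lemma intR_opp x : intR (- x) = Ropp (intR x).
Proof. by rewrite !intRE rmorphN. Qed.
Lemma intR_inj x y : intR x = intR y -> x = y.
Proof. by rewrite !intRE => /eqP; rewrite eqr_int => /eqP. Qed.

Section MC2.
Local Open Scope ring_scope.
Lemma cubicE (A B C D : int) : cubic A B C D = Poly [:: D; C; B; A].
Proof.
apply/polyP => i; rewrite coef_Poly /cubic !coefD !coefCM coefC !coefXn coefX.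
by case: i => [|[|[|[|i]]]] /=; rewrite ?mulr0 ?mulr1 ?addr0 ?add0r ?nth_nil.
Qed.

Lemma cubic_seq (A B C D : int) : A != 0 -> polyseq (cubic A B C D) = [:: D; C; B; A].
Proof. by move=> hA; rewrite cubicE (@PolyK _ 0). Qed.
Lemma size_cubic (A B C D : int) : A != 0 -> size (cubic A B C D) = 4%N.
Proof. by move=> hA; rewrite cubic_seq. Qed.
End MC2.

Lemma peval_cubic (A B C D : int) x : A <> GRing.zero ->
  peval (cubic A B C D) x =
  (intR A * x ^ 3 + intR B * x ^ 2 + intR C * x + intR D)%R.
Proof. move=> hA; rewrite /peval cubic_seq /=; [ring | by apply/eqP]. Qed.

Section MC25.
Local Open Scope ring_scope.
Lemma peval_horner (p : {poly int}) x :
  peval p x = (map_poly (intr : int -> R) p).[x].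
Proof.
rewrite /peval map_polyE horner_Poly.
elim: (polyseq p) => [|c s IH] //=.
by rewrite IH intRE RplusE RmultE addrC mulrC.
Qed.

Lemma alg_int_pow x n : alg_int x -> alg_int (pow x n).
Proof.
have E y : alg_int y <-> integralOver (intr : int -> R) y.
  split => [[p [mp hp]] | [p mp hp]].
    by exists p => //; rewrite /root -peval_horner hp.
  by exists p; split => //; rewrite peval_horner; apply/eqP.
move=> /E hx; apply/E; elim: n => [|n IH] /=.
  exact: integral1.
by rewrite RmultE; apply: integral_mul.
Qed.

End MC25.
Module MCp.
Import mathcomp.algebra_tactics.ring.
Local Open Scope ring_scope.
Lemma no_rat_root (A B C D m n : int) : A != 0 -> n != 0 ->
  A * (m * m * m) + B * (m * m) * n + C * m * (n * n) + D * (n * n * n) = 0 ->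
  ~ Zirreducible (cubic A B C D).
Proof.
move=> hA hn heq [_ [_ hirr]].
pose r : rat := m%:~R / n%:~R.
have hroot : root (map_poly (intr : int -> rat) (cubic A B C D)) r.
  rewrite /root /cubic !rmorphD !rmorphM /= !map_polyC map_polyX !hornerD !hornerM !hornerC hornerX.
  have hn' : (n%:~R : rat) != 0 by rewrite intr_eq0.
  apply/eqP; apply: (mulIf (expf_neq0 3 hn')); rewrite mul0r.
  have E : ((A * (m * m * m) + B * (m * m) * n + C * m * (n * n) + D * (n * n * n))%:~R : rat) = 0.
    by rewrite heq.
  rewrite !rmorphD !rmorphM in E; rewrite -E /r; field; exact: hn'.
move: hroot; rewrite root_factor_theorem => /dvdpP_rat_int [p1 [a ha hp1] [r' hr']].
have sp1 : size p1 = 2%N.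
  have := size_XsubC r; rewrite hp1 size_scale // size_map_inj_poly //.
  exact: intr_inj.
have nz1 : p1 != 0 by rewrite -size_poly_eq0 sp1.
have nz2 : r' != 0.
  by apply/eqP => h; move: (@size_cubic A B C D hA); rewrite hr' h mulr0 size_poly0.
have := size_mul nz1 nz2; rewrite -hr' size_cubic // sp1 => hs.
case: (hirr _ _ hr') => /[dup] + _; rewrite poly_unitE => /andP [/eqP hs1 _].
  by rewrite sp1 in hs1.
by rewrite hs1 in hs.
Qed.
End MCp.
Import MCp.

Open Scope R_scope.

Definition isQ (x : R) : Prop := exists r : Q, x = Q2R r.

Lemma isQ_Q r : isQ (Q2R r). Proof. by exists r. Qed.
Lemma isQ_add x y : isQ x -> isQ y -> isQ (x + y).
Proof. intros [r ->] [s ->]; exists (r + s)%Q; now rewrite Q2R_plus. Qed.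
Lemma isQ_mul x y : isQ x -> isQ y -> isQ (x * y).
Proof. intros [r ->] [s ->]; exists (r * s)%Q; now rewrite Q2R_mult. Qed.
Lemma isQ_opp x : isQ x -> isQ (- x).
Proof. intros [r ->]; exists (- r)%Q; now rewrite Q2R_opp. Qed.
Lemma isQ_sub x y : isQ x -> isQ y -> isQ (x - y).
Proof. intros; unfold Rminus; apply isQ_add; auto; apply isQ_opp; auto. Qed.
Lemma isQ_inv x : isQ x -> isQ (/ x).
Proof.
intros [r ->]. destruct (Qeq_dec r 0) as [h|h].
- exists 0%Q. rewrite (Qeq_eqR _ _ h). unfold Q2R; simpl. rewrite Rmult_0_l Rinv_0. reflexivity.
- exists (/ r)%Q. now rewrite Q2R_inv.
Qed.
Lemma isQ_div x y : isQ x -> isQ y -> isQ (x / y).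
Proof. intros; unfold Rdiv; apply isQ_mul; auto; apply isQ_inv; auto. Qed.
Lemma isQ_IZR z : isQ (IZR z).
Proof. exists (inject_Z z). unfold Q2R; simpl. field. Qed.
Lemma isQ_INR n : isQ (INR n).
Proof. rewrite INR_IZR_INZ; apply isQ_IZR. Qed.
Lemma isQ_pow x n : isQ x -> isQ (x ^ n).
Proof. intros h; induction n; simpl. apply (isQ_IZR 1). now apply isQ_mul. Qed.

Definition toZ (z : int) : Z :=
  match z with Posz n => Z.of_nat n | Negz n => (- Z.of_nat (S n))%Z end.
Lemma intR_IZR z : intR z = IZR (toZ z).
Proof.
destruct z as [n|n]; rewrite /intR /toZ.
- apply INR_IZR_INZ.
- by rewrite opp_IZR -INR_IZR_INZ.
Qed.
Lemma isQ_intR z : isQ (intR z).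
Proof. rewrite intR_IZR; apply isQ_IZR. Qed.

Lemma indep (th p q : R) :
  ~ isQ th -> isQ p -> isQ q ->
  th ^ 3 = p * th + q ->
  (forall t, t ^ 3 = p * t + q -> t = th) ->
  forall a b c, isQ a -> isQ b -> isQ c -> a + b * th + c * th ^ 2 = 0 ->
  a = 0 /\ b = 0 /\ c = 0.
Proof.
intros hth hp hq hg hu a b c ha hb hc h.
assert (hc0 : c = 0).
{ destruct (Req_dec c 0) as [e|e]; [exact e|exfalso].
  set (be := b / c). set (ga := a / c).
  assert (qbe : isQ be) by (apply isQ_div; auto).
  assert (qga : isQ ga) by (apply isQ_div; auto).
  assert (h2 : th ^ 2 + be * th + ga = 0).
  { unfold be, ga. apply (Rmult_eq_reg_l c); [|exact e]. rewrite Rmult_0_r -h. field. exact e. }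
  set (s := be ^ 2 - ga - p). set (t := be * ga - q).
  assert (hst : s * th + t = 0).
  { unfold s, t. assert (E : th ^ 3 = th * (th ^ 2 + be*th + ga) - be * (th ^ 2 + be * th + ga) + (be^2 - ga) * th + be * ga) by ring.
    rewrite h2 in E. nra. }
  destruct (Req_dec s 0) as [es|es].
  - assert (et : t = 0) by (rewrite es in hst; lra).
    set (th' := - be - th).
    assert (e' : th' ^ 3 = p * th' + q).
    { assert (h2' : th' ^ 2 + be * th' + ga = 0) by (unfold th'; nra).
      assert (E : th' ^ 3 = th' * (th' ^ 2 + be*th' + ga) - be * (th' ^ 2 + be * th' + ga) + (be^2 - ga) * th' + be * ga) by ring.
      rewrite h2' in E. unfold s, t in *. nra. }
    apply hu in e'. apply hth. replace th with (- be / 2) by (unfold th' in e'; lra).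
    apply isQ_div. now apply isQ_opp. apply (isQ_IZR 2).
  - apply hth. assert (E : th = - t / s).
    { apply (Rmult_eq_reg_l s); [|exact es]. unfold Rdiv. rewrite -Rmult_assoc (Rmult_comm s (- t)) Rmult_assoc Rinv_r; [lra|exact es]. }
    rewrite E.
    apply isQ_div; [apply isQ_opp|]; unfold s, t;
      repeat (apply (isQ_IZR 1) || apply isQ_inv || apply isQ_sub || apply isQ_add || apply isQ_mul || apply isQ_pow); auto. }
subst c.
assert (hb0 : b = 0).
{ destruct (Req_dec b 0) as [e|e]; [exact e|exfalso].
  apply hth. replace th with (- a / b). apply isQ_div; auto. now apply isQ_opp.
  field_simplify in h. apply (Rmult_eq_reg_l b); [|exact e]. field_simplify; [lra|exact e]. }
subst b. repeat split; lra.
Qed.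

Lemma disc_pos (th p q : R) :
  ~ isQ th -> th ^ 3 = p * th + q ->
  (forall t, t ^ 3 = p * t + q -> t = th) ->
  0 < 3 * th ^ 2 / 4 - p.
Proof.
intros hth hg hu.
destruct (Rlt_or_le 0 (3 * th ^ 2 / 4 - p)) as [h|h]; [exact h|exfalso].
set (s := sqrt (p - 3 * th ^ 2 / 4)).
assert (hs : s * s = p - 3 * th ^ 2 / 4) by (apply sqrt_sqrt; lra).
assert (hs0 : 0 <= s) by apply sqrt_pos.
assert (e1 : - th / 2 + s = th).
{ apply hu. assert (q = th ^ 3 - p * th) as -> by lra. nra. }
assert (e2 : - th / 2 - s = th).
{ apply hu. assert (q = th ^ 3 - p * th) as -> by lra. nra. }
assert (th = 0) by lra. apply hth. rewrite H. exists 0%Q. unfold Q2R; simpl; ring.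
Qed.

Definition T3 := (R * R * R)%type.
Definition val3 (th : R) (t : T3) : R := let '(a, b, c) := t in a + b * th + c * th ^ 2.
Definition mul3 (p q : R) (s t : T3) : T3 :=
  let '(a, b, c) := s in let '(a', b', c') := t in
  (a * a' + q * (b * c' + c * b'),
   a * b' + b * a' + p * (b * c' + c * b') + q * c * c',
   a * c' + b * b' + c * a' + p * c * c').
Definition nm3 (p q : R) (t : T3) : R := let '(a, b, c) := t in
  a * ((a + c * p) * (a + c * p) - (b * p + c * q) * b)
  - c * q * (b * (a + c * p) - (b * p + c * q) * c)
  + b * q * (b * b - (a + c * p) * c).
Definition adj3 (p q : R) (t : T3) : T3 := let '(a, b, c) := t in
  ((a + c * p) * (a + c * p) - (b * p + c * q) * b,
   - (b * (a + c * p) - (b * p + c * q) * c),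
   b * b - (a + c * p) * c).
Definition sc3 (k : R) (t : T3) : T3 := let '(a, b, c) := t in (k * a, k * b, k * c).
Definition dl3 (th : R) (t : T3) : R := let '(a, b, c) := t in b - c * th.
Definition ep3 (th p : R) (t : T3) : R := let '(a, b, c) := t in a + p * c - c * th ^ 2.
Definition Nq (th p d e : R) : R := e ^ 2 - th * e * d + (th ^ 2 - p) * d ^ 2.
Definition isQ3 (t : T3) : Prop := let '(a, b, c) := t in isQ a /\ isQ b /\ isQ c.

Lemma val3_mul th p q s t : th ^ 3 = p * th + q ->
  val3 th (mul3 p q s t) = val3 th s * val3 th t.
Proof.
intros hg; destruct s as [[a b] c]; destruct t as [[a' b'] c']; simpl.
assert (q = th ^ 3 - p * th) as -> by lra. ring.
Qed.

Lemma nm3_mul p q s t : nm3 p q (mul3 p q s t) = nm3 p q s * nm3 p q t.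
Proof.
destruct s as [[a b] c]; destruct t as [[a' b'] c']; simpl. ring.
Qed.

Lemma adj3_mul p q t : mul3 p q (adj3 p q t) t = (nm3 p q t, 0, 0).
Proof.
destruct t as [[a b] c]; simpl. f_equal; [f_equal|]; ring.
Qed.

Lemma nm3_Nq th p q t : th ^ 3 = p * th + q ->
  nm3 p q t = val3 th t * Nq th p (dl3 th t) (ep3 th p t).
Proof.
intros hg; destruct t as [[a b] c]; simpl.
assert (q = th ^ 3 - p * th) as -> by lra. unfold Nq. ring.
Qed.

Lemma val3_sc th k t : val3 th (sc3 k t) = k * val3 th t.
Proof. destruct t as [[a b] c]; simpl; ring. Qed.

Lemma nm3_sc p q k t : nm3 p q (sc3 k t) = k ^ 3 * nm3 p q t.
Proof. destruct t as [[a b] c]; simpl; ring. Qed.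

Lemma isQ3_mul p q s t : isQ p -> isQ q -> isQ3 s -> isQ3 t -> isQ3 (mul3 p q s t).
Proof.
intros hp hq; destruct s as [[a b] c]; destruct t as [[a' b'] c']; simpl.
intros [? [? ?]] [? [? ?]].
repeat split; repeat (apply isQ_add || apply isQ_mul); auto.
Qed.

Lemma isQ3_adj p q t : isQ p -> isQ q -> isQ3 t -> isQ3 (adj3 p q t).
Proof.
intros hp hq; destruct t as [[a b] c]; simpl. intros [? [? ?]].
repeat split; repeat (apply isQ_opp || apply isQ_sub || apply isQ_add || apply isQ_mul); auto.
Qed.

Lemma isQ3_sc k t : isQ k -> isQ3 t -> isQ3 (sc3 k t).
Proof.
intros hk; destruct t as [[a b] c]; simpl. intros [? [? ?]].
repeat split; apply isQ_mul; auto.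
Qed.

Lemma nm3_one p q : nm3 p q (1, 0, 0) = 1.
Proof. simpl; ring. Qed.

Lemma coord_eq th p q s t :
  ~ isQ th -> isQ p -> isQ q -> th ^ 3 = p * th + q ->
  (forall x, x ^ 3 = p * x + q -> x = th) ->
  isQ3 s -> isQ3 t -> val3 th s = val3 th t -> s = t.
Proof.
intros hth hp hq hg hu. destruct s as [[a b] c]; destruct t as [[a' b'] c']; simpl.
intros [? [? ?]] [? [? ?]] e.
destruct (@indep th p q hth hp hq hg hu (a - a') (b - b') (c - c')) as [? [? ?]];
  try (apply isQ_sub; auto); try lra.
f_equal; [f_equal|]; lra.
Qed.

Fixpoint tpow3 (p q : R) (t : T3) (n : nat) : T3 :=
  match n with O => (1, 0, 0) | S n => mul3 p q (tpow3 p q t n) t end.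

Lemma val3_tpow th p q t n : th ^ 3 = p * th + q ->
  val3 th (tpow3 p q t n) = val3 th t ^ n.
Proof.
intros hg; induction n as [|n IH]; simpl. ring.
rewrite val3_mul // IH. ring.
Qed.

Lemma nm3_tpow p q t n : nm3 p q (tpow3 p q t n) = nm3 p q t ^ n.
Proof.
induction n as [|n IH]; simpl. ring. rewrite nm3_mul IH. ring.
Qed.

Lemma isQ3_tpow p q t n : isQ p -> isQ q -> isQ3 t -> isQ3 (tpow3 p q t n).
Proof.
intros hp hq ht; induction n as [|n IH]; simpl.
repeat split; first [apply (isQ_IZR 1) | apply (isQ_IZR 0)].
now apply isQ3_mul.
Qed.

Definition isZ (x : R) : Prop := exists z : Z, x = IZR z.
Lemma isZ_add x y : isZ x -> isZ y -> isZ (x + y).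
Proof. intros [a ->] [b ->]; exists (a + b)%Z; now rewrite plus_IZR. Qed.
Lemma isZ_mul x y : isZ x -> isZ y -> isZ (x * y).
Proof. intros [a ->] [b ->]; exists (a * b)%Z; now rewrite mult_IZR. Qed.
Lemma isZ_opp x : isZ x -> isZ (- x).
Proof. intros [a ->]; exists (- a)%Z; now rewrite opp_IZR. Qed.
Lemma isZ_sub x y : isZ x -> isZ y -> isZ (x - y).
Proof. intros; unfold Rminus; apply isZ_add; auto; apply isZ_opp; auto. Qed.
Lemma isZ_IZR z : isZ (IZR z). Proof. now exists z. Qed.
Lemma isZ_intR z : isZ (intR z). Proof. rewrite intR_IZR; apply isZ_IZR. Qed.

Lemma nm3_isZ p q a b c : isZ p -> isZ q -> isZ a -> isZ b -> isZ c -> isZ (nm3 p q (a, b, c)).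
Proof.
intros; simpl.
repeat (apply isZ_opp || apply isZ_sub || apply isZ_add || apply isZ_mul); auto.
Qed.

Lemma isZ_abs x : isZ x -> x <> 0 -> 1 <= Rabs x.
Proof.
intros [z ->] hz. rewrite -abs_IZR. apply IZR_le.
assert (z <> 0%Z) by (intro; subst; apply hz; reflexivity). lia.
Qed.

Lemma bernoulli h n : 0 <= h -> 1 + INR n * h <= (1 + h) ^ n.
Proof.
intros hh; induction n as [|n IH]. simpl; lra.
rewrite S_INR /=. assert (0 <= INR n) by apply pos_INR.
assert (0 <= INR n * h * h) by (apply Rmult_le_pos; [apply Rmult_le_pos|]; lra).
nra.
Qed.

Lemma bounded_pow y K : 0 <= y -> (forall n, y ^ n <= K) -> y <= 1.
Proof.
intros hy hb. destruct (Rle_or_lt y 1) as [h|h]; [exact h|exfalso].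
set (h' := y - 1).
destruct (archimed (K / h')) as [hn _].
assert (hz : (0 <= up (K / h'))%Z).
{ apply le_IZR. assert (1 <= K) by (specialize (hb O); simpl in hb; lra).
  assert (0 < K / h') by (apply Rdiv_lt_0_compat; unfold h'; lra). simpl; lra. }
destruct (IZN _ hz) as [n hn'].
have := @bernoulli (y - 1) n ltac:(lra).
replace (1 + (y - 1)) with y by ring. intros hbe.
specialize (hb n). rewrite hn' -INR_IZR_INZ in hn.
assert (INR n * h' > K).
{ unfold h' in *. apply (Rmult_lt_compat_r (y - 1)) in hn; [|lra].
  unfold Rdiv in hn. rewrite Rmult_assoc Rinv_l in hn; lra. }
unfold h' in *. lra.
Qed.

Lemma nearfrac_shift z y : - / 2 <= y < / 2 -> nearfrac (IZR z + y) = y.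
Proof.
intros hy. unfold nearfrac, Rfloor.
rewrite -(tech_up (IZR z + y + / 2) (z + 1)).
- replace (z + 1 - 1)%Z with z by lia. ring.
- rewrite plus_IZR. lra.
- rewrite plus_IZR. lra.
Qed.

Lemma abs_lt_sq x y : 0 <= y -> x ^ 2 < y ^ 2 -> Rabs x < y.
Proof.
intros hy h. destruct (Rcase_abs x) as [hx|hx].
rewrite Rabs_left //. nra. rewrite Rabs_right //. nra.
Qed.

Lemma Nq_small th p d e eta :
  0 < 3 * th ^ 2 / 4 - p -> 0 < eta ->
  Nq th p d e < Rmin ((3 * th ^ 2 / 4 - p) * eta ^ 2 / (4 * (1 + th ^ 2))) (eta ^ 2 / 4) ->
  Rabs d < eta /\ Rabs e < eta.
Proof.
intros hm he hN. set (m := 3 * th ^ 2 / 4 - p) in *.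
assert (E : Nq th p d e = (e - th * d / 2) ^ 2 + m * d ^ 2) by (unfold Nq, m; field).
assert (h1 := Rmin_l ((m) * eta ^ 2 / (4 * (1 + th ^ 2))) (eta ^ 2 / 4)).
assert (h2 := Rmin_r ((m) * eta ^ 2 / (4 * (1 + th ^ 2))) (eta ^ 2 / 4)).
assert (hd : m * d ^ 2 < m * eta ^ 2 / (4 * (1 + th ^ 2))).
{ assert (0 <= (e - th * d / 2) ^ 2) by apply pow2_ge_0. lra. }
assert (hd2 : d ^ 2 * (4 * (1 + th ^ 2)) < eta ^ 2).
{ assert (0 < 4 * (1 + th ^ 2)) by nra.
  apply (Rmult_lt_reg_l m); [exact hm|].
  apply (Rmult_lt_reg_r (/ (4 * (1 + th ^ 2)))). apply Rinv_0_lt_compat; lra.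
  replace (m * (d ^ 2 * (4 * (1 + th ^ 2))) * / (4 * (1 + th ^ 2))) with (m * d ^ 2) by (field; lra).
  replace (m * eta ^ 2 * / (4 * (1 + th ^ 2))) with (m * eta ^ 2 / (4 * (1 + th ^ 2))) by (unfold Rdiv; ring).
  exact hd. }
assert (he2 : (e - th * d / 2) ^ 2 < eta ^ 2 / 4).
{ assert (0 <= m * d ^ 2) by (apply Rmult_le_pos; nra). lra. }
assert (hA1 : Rabs d < eta / 2).
{ apply abs_lt_sq; [lra|]. nra. }
assert (hA2 : Rabs (th * d) < eta / 2).
{ apply abs_lt_sq; [lra|]. nra. }
assert (hA3 : Rabs (e - th * d / 2) < eta / 2).
{ apply abs_lt_sq; [lra|]. nra. }
split. lra.
replace e with ((e - th * d / 2) + (th * d) / 2) by field.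
eapply Rle_lt_trans. apply Rabs_triang.
rewrite /Rdiv Rabs_mult (Rabs_right (/ 2)); [|lra]. lra.
Qed.



Definition zint (z : Z) : int :=
  match z with Z0 => Posz 0 | Zpos p => Posz (Pos.to_nat p) | Zneg p => Negz (Nat.pred (Pos.to_nat p)) end.
Lemma intR_zint z : intR (zint z) = IZR z.
Proof.
destruct z as [|p|p]; rewrite /zint /intR //.
- by rewrite INR_IPR.
- have hp := Pos2Nat.is_pos p.
  rewrite (Nat.lt_succ_pred 0 (Pos.to_nat p)) // INR_IPR. reflexivity.
Qed.

Lemma isQ_nm3 p q t : isQ p -> isQ q -> isQ3 t -> isQ (nm3 p q t).
Proof.
intros hp hq; destruct t as [[a b] c]; simpl; intros [? [? ?]].
repeat (apply isQ_opp || apply isQ_sub || apply isQ_add || apply isQ_mul); auto.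
Qed.

Ltac qsolve := repeat (assumption || apply isQ_intR || apply isQ_Q || apply isQ_INR || apply (isQ_IZR 1) || apply (isQ_IZR _) || apply isQ_pow || apply isQ_opp || apply isQ_sub || apply isQ_add || apply isQ_mul || apply isQ_inv).
Ltac zsolve := repeat (assumption || apply isZ_intR || apply (isZ_IZR 1) || apply (isZ_IZR _) || apply isZ_opp || apply isZ_sub || apply isZ_add || apply isZ_mul).

Lemma small_shift z y : Rabs y < / 2 -> nearfrac (IZR z + y) = y.
Proof. intro h. apply nearfrac_shift. apply Rabs_def2 in h. lra. Qed.

Lemma intR0 : intR (GRing.zero) = 0.
Proof. reflexivity. Qed.

Lemma theta_irrat (A B C D : int) alpha :
  (0 < intR A) -> Zirreducible (cubic A B C D) ->
  peval (cubic A B C D) alpha = 0 ->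
  ~ isQ (3 * intR A * alpha + intR B).
Proof.
intros hA hirr hr [[N M] hN].
have hA0 : A <> GRing.zero by intro h; rewrite h intR0 in hA; lra.
rewrite peval_cubic // in hr.
unfold Q2R in hN; simpl in hN.
set (Mr := IZR (Z.pos M)) in *.
have hM : Mr <> 0 by unfold Mr; apply not_0_IZR; lia.
set (mI := GRing.add (zint N) (GRing.opp (GRing.mul B (zint (Z.pos M))))).
set (nI := GRing.mul (GRing.mul (Posz 3) A) (zint (Z.pos M))).
have emI : intR mI = IZR N - intR B * Mr.
{ by rewrite /mI intR_add intR_opp intR_mul !intR_zint. }
have enI : intR nI = 3 * intR A * Mr.
{ rewrite /nI !intR_mul !intR_zint /Mr. simpl. f_equal. f_equal. rewrite /intR. simpl. ring. }
have hmn : intR mI = intR nI * alpha.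
{ rewrite emI enI. assert (IZR N = (3 * intR A * alpha + intR B) * Mr).
  { rewrite hN. field. exact hM. }
  rewrite H. ring. }
clearbody mI nI.
apply: (@no_rat_root A B C D mI nI).
- by apply/eqP.
- apply/eqP => h. have : intR nI = 0 by rewrite h.
  rewrite enI. intro h'. assert (0 < 3 * intR A * Mr \/ 3 * intR A * Mr < 0).
  { destruct (Rlt_or_le 0 Mr). left; nra. right. assert (Mr < 0) by lra. nra. }
  lra.
- apply intR_inj. rewrite intR0 !intR_add !intR_mul hmn.
  transitivity (intR nI ^ 3 * (intR A * alpha ^ 3 + intR B * alpha ^ 2 + intR C * alpha + intR D)).
  ring.
  rewrite hr. ring.
- exact hirr.
Qed.


Theorem mainTheorem19
  (A B C D : int) (alpha : R) (d : nat) (lambda : R) (a b c : nat -> Q) :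
  (0 < intR A)%R ->
  Zirreducible (cubic A B C D) ->
  (forall x : R, peval (cubic A B C D) x = 0%R <-> x = alpha) ->
  let theta := (3 * intR A * alpha + intR B)%R in
  (0 < d)%nat ->
  (forall x : R, inK theta x -> alg_int x ->
     exists u v w : Z,
       x = ((IZR u + IZR v * theta + IZR w * theta ^ 2) / INR d)%R) ->
  inK theta lambda -> alg_int lambda -> alg_int (/ lambda)%R ->
  (1 < lambda)%R ->
  (forall n : nat,
     (Q2R (a n) + Q2R (b n) * theta + Q2R (c n) * theta ^ 2)%R = (lambda ^ n)%R) ->
  let k := fun n : nat => (INR d * Q2R (c n))%R in
  let l := fun n : nat => (9 * intR A ^ 2 * k n)%R in
  exists n0 : nat, forall n : nat, (n0 < n)%nat ->
    nearfrac (l n * alpha) = (3 * intR A * nearfrac (k n * theta))%R /\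
    nearfrac (l n * alpha ^ 2) =
      (nearfrac (k n * theta ^ 2) - 2 * intR B * nearfrac (k n * theta))%R.
Proof.
intros hA hirr hroot theta hd hOK hK hal hal' hl1 hcoef k l.
have hA0 : A <> GRing.zero by intro h; rewrite h intR0 in hA; lra.
have hd0 : INR d <> 0.
{ apply not_0_INR. move/ssrnat.ltP: hd. lia. }
have hdpos : 0 < INR d by (apply lt_0_INR; move/ssrnat.ltP: hd; lia).
set (pR := 3 * (intR B ^ 2 - 3 * intR A * intR C)).
set (qR := -2 * intR B ^ 3 + 9 * intR A * intR B * intR C - 27 * intR A ^ 2 * intR D).
have gE : forall t, t ^ 3 - pR * t - qR =
   27 * intR A ^ 2 * peval (cubic A B C D) ((t - intR B) / (3 * intR A)).
{ intro t. rewrite peval_cubic //. unfold pR, qR. field. lra. }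
have hg : theta ^ 3 = pR * theta + qR.
{ have := gE theta. have -> : (theta - intR B) / (3 * intR A) = alpha by (unfold theta; field; lra).
  rewrite (proj2 (hroot alpha) erefl). lra. }
have hu : forall t, t ^ 3 = pR * t + qR -> t = theta.
{ intros t ht. have := gE t. intro E.
  have h0 : peval (cubic A B C D) ((t - intR B) / (3 * intR A)) = 0.
  { apply (Rmult_eq_reg_l (27 * intR A ^ 2)). rewrite -E. lra. nra. }
  apply hroot in h0. unfold theta; rewrite -h0. field. lra. }
have hth : ~ isQ theta.
{ rewrite /theta. exact (@theta_irrat A B C D alpha hA hirr (proj2 (hroot alpha) erefl)). }
have hpQ : isQ pR.
{ unfold pR. qsolve. }
have hqQ : isQ qR.
{ unfold qR. qsolve. }
have hpZ : isZ pR.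
{ unfold pR. rewrite /pow !Rmult_1_r. zsolve. }
have hqZ : isZ qR.
{ unfold qR. rewrite /pow !Rmult_1_r. zsolve. }
have hm : 0 < 3 * theta ^ 2 / 4 - pR by exact (@disc_pos theta pR qR hth hg hu).
have ceq := fun s t => @coord_eq theta pR qR s t hth hpQ hqQ hg hu.
set (tn := fun n => (Q2R (a n), Q2R (b n), Q2R (c n)) : T3).
have htn : forall n, val3 theta (tn n) = lambda ^ n by (intro n; apply hcoef).
have hQn : forall n, isQ3 (tn n) by (intro n; simpl; repeat split; apply isQ_Q).
set (t1 := tn 1%nat).
have hl : val3 theta t1 = lambda by (rewrite htn; simpl; ring).
set (x := nm3 pR qR t1).
have htp : forall n, tn n = tpow3 pR qR t1 n.
{ intro n. apply ceq; auto.
  - apply isQ3_tpow; auto. exact (hQn 1%nat).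
  - rewrite val3_tpow // htn hl. reflexivity. }
have hnm : forall n, nm3 pR qR (tn n) = x ^ n.
{ intro n. rewrite htp nm3_tpow. reflexivity. }
have hrep : forall t, isQ3 t -> alg_int (val3 theta t) ->
  exists u v w : Z, t = sc3 (/ INR d) (IZR u, IZR v, IZR w).
{ intros [[a0 b0] c0] hq hai.
  have hk : inK theta (val3 theta (a0, b0, c0)).
  { destruct hq as [[ra ->] [[rb ->] [rc ->]]]. exists ra, rb, rc. reflexivity. }
  destruct (hOK _ hk hai) as [u [v [w e]]].
  exists u, v, w. apply ceq; auto.
  - simpl. repeat split; apply isQ_mul; try apply isQ_inv; try apply isQ_INR; apply isQ_IZR.
  - rewrite e val3_sc. simpl. field. exact hd0. }
have hint : forall t, isQ3 t -> alg_int (val3 theta t) -> isZ (INR d ^ 3 * nm3 pR qR t).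
{ intros t hq hai. destruct (hrep t hq hai) as [u [v [w ->]]].
  rewrite nm3_sc. replace (INR d ^ 3 * ((/ INR d) ^ 3 * nm3 pR qR (IZR u, IZR v, IZR w)))
    with (nm3 pR qR (IZR u, IZR v, IZR w)) by (field; exact hd0).
  apply nm3_isZ; auto; apply isZ_IZR. }
set (Nqn := fun n => Nq theta pR (dl3 theta (tn n)) (ep3 theta pR (tn n))).
have hNn : forall n, nm3 pR qR (tn n) = lambda ^ n * Nqn n.
{ intro n. rewrite (@nm3_Nq theta pR qR) // htn. reflexivity. }
have Nq_dec : forall de ep, Nq theta pR de ep = (ep - theta * de / 2) ^ 2 + (3 * theta ^ 2 / 4 - pR) * de ^ 2.
{ intros. unfold Nq. field. }
have hlam0 : 0 < lambda by lra.
have hN1 : 0 < Nqn 1%nat.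
{ unfold Nqn. rewrite Nq_dec.
  destruct (Rlt_or_le 0 ((ep3 theta pR (tn 1%nat) - theta * dl3 theta (tn 1%nat) / 2) ^ 2 +
     (3 * theta ^ 2 / 4 - pR) * dl3 theta (tn 1%nat) ^ 2)) as [h|h]; [exact h|exfalso].
  have hsq1 := pow2_ge_0 (ep3 theta pR (tn 1%nat) - theta * dl3 theta (tn 1%nat) / 2).
  have hsq2 := pow2_ge_0 (dl3 theta (tn 1%nat)).
  have hd1 : dl3 theta (tn 1%nat) ^ 2 = 0 by nra.
  have hd1' : dl3 theta (tn 1%nat) = 0 by nra.
  rewrite hd1' in h. 
  have he1 : ep3 theta pR (tn 1%nat) ^ 2 = 0 by nra.
  have he1' : ep3 theta pR (tn 1%nat) = 0 by nra.
  simpl in hd1', he1'.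
  destruct (@indep theta pR qR hth hpQ hqQ hg hu (Q2R (b 1%nat)) (- Q2R (c 1%nat)) 0) as [hb1 [hc1 _]].
  1,2,3: qsolve.
  { lra. }
  have hc1' : Q2R (c 1%nat) = 0 by lra.
  rewrite hc1' in he1'.
  have : val3 theta (tn 1%nat) = 0 by (simpl; rewrite hb1 hc1'; lra).
  rewrite htn. simpl. lra. }
have hx : x = lambda * Nqn 1%nat by (rewrite /x /t1 hNn; simpl; ring).
have hxpos : 0 < x by rewrite hx; apply Rmult_lt_0_compat.
have hd3 : 0 < INR d ^ 3 by apply pow_lt.
have hx1 : 1 <= x.
{ have hb : forall n, (/ x) ^ n <= INR d ^ 3.
  { intro n. have hz := hint (tn n) (hQn n) ltac:(rewrite htn; apply alg_int_pow; exact hal).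
    rewrite hnm in hz. have hxn : 0 < x ^ n by apply pow_lt.
    have := @isZ_abs _ hz ltac:(apply Rgt_not_eq; apply Rmult_lt_0_compat; lra).
    rewrite Rabs_right; [|apply Rle_ge; apply Rmult_le_pos; lra].
    intro h1. rewrite pow_inv. apply (Rmult_le_reg_r (x ^ n)); [exact hxn|].
    rewrite Rinv_l; [lra|apply Rgt_not_eq; exact hxn]. }
  have := @bounded_pow _ _ (Rlt_le _ _ (Rinv_0_lt_compat _ hxpos)) hb.
  intro h. have := Rinv_r x ltac:(lra). nra. }
set (adj := adj3 pR qR t1).
have hadjQ : isQ3 adj by apply isQ3_adj; auto; exact (hQn 1%nat).
have hxQ : isQ x by apply isQ_nm3; auto; exact (hQn 1%nat).
have hmadj := adj3_mul pR qR t1. fold adj x in hmadj.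
have hvadj : val3 theta adj * lambda = x.
{ rewrite -hl -(@val3_mul theta pR qR) // hmadj. simpl. ring. }
have hnadj : nm3 pR qR adj * x = x ^ 3.
{ rewrite /x -nm3_mul. fold x. rewrite hmadj. simpl. ring. }
set (iv := sc3 (/ x) adj).
have hivQ : isQ3 iv by apply isQ3_sc; [apply isQ_inv|]; auto.
have hviv : val3 theta iv = / lambda.
{ rewrite /iv val3_sc. apply (Rmult_eq_reg_r lambda); [|lra].
  rewrite Rmult_assoc hvadj Rinv_l; [|lra]. field. lra. }
have hniv : nm3 pR qR iv = / x.
{ rewrite /iv nm3_sc. apply (Rmult_eq_reg_r x); [|lra].
  rewrite Rmult_assoc hnadj Rinv_l; [|lra]. field. lra. }
have hx2 : x <= 1.
{ have hb : forall n, x ^ n <= INR d ^ 3.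
  { intro n. have hz := hint (tpow3 pR qR iv n) (@isQ3_tpow pR qR iv n hpQ hqQ hivQ)
      ltac:(rewrite val3_tpow // hviv; apply alg_int_pow; exact hal').
    rewrite nm3_tpow hniv in hz.
    have hxn : 0 < (/ x) ^ n by apply pow_lt; apply Rinv_0_lt_compat.
    have := @isZ_abs _ hz ltac:(apply Rgt_not_eq; apply Rmult_lt_0_compat; lra).
    rewrite Rabs_right; [|apply Rle_ge; apply Rmult_le_pos; lra].
    intro h1. apply (Rmult_le_reg_r ((/ x) ^ n)); [exact hxn|].
    rewrite -Rpow_mult_distr Rinv_r; [|lra]. rewrite pow1. lra. }
  exact (@bounded_pow _ _ (Rlt_le _ _ hxpos) hb). }
have hxe : x = 1 by lra.
have hNqn : forall n, Nqn n = (/ lambda) ^ n.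
{ intro n. have := hNn n. rewrite hnm hxe pow1. intro h.
  rewrite pow_inv. apply (Rmult_eq_reg_l (lambda ^ n)); [|apply pow_nonzero; lra].
  rewrite -h Rinv_r //. apply pow_nonzero; lra. }
set (Dp := 3 * intR A + 2 * Rabs (intR B) + 1).
have hDp : 1 <= Dp by (unfold Dp; have := Rabs_pos (intR B); lra).
set (eta := / (4 * INR d * Dp)).
have heta : 0 < eta by (apply Rinv_0_lt_compat; nra).
set (B0 := Rmin ((3 * theta ^ 2 / 4 - pR) * eta ^ 2 / (4 * (1 + theta ^ 2))) (eta ^ 2 / 4)).
have hB0 : 0 < B0.
{ apply Rmin_pos. apply Rdiv_lt_0_compat. apply Rmult_lt_0_compat; [lra|]. apply pow_lt; lra. nra.
  apply Rdiv_lt_0_compat. apply pow_lt; lra. lra. }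
have hil : Rabs (/ lambda) < 1.
{ rewrite Rabs_right. apply (Rmult_lt_reg_l lambda); [lra|]. rewrite Rinv_r; lra.
  apply Rle_ge; apply Rlt_le; apply Rinv_0_lt_compat; lra. }
destruct (pow_lt_1_zero (/ lambda) hil B0 hB0) as [N hN].
exists N. intros n hn. move/ssrnat.ltP: hn => hn.
have hsm : Nqn n < B0.
{ rewrite hNqn. have := hN n ltac:(lia). rewrite Rabs_right //.
  apply Rle_ge; apply pow_le; apply Rlt_le; apply Rinv_0_lt_compat; lra. }
destruct (@Nq_small theta pR _ _ eta hm heta hsm) as [hdl hep].
destruct (hrep (tn n) (hQn n) ltac:(rewrite htn; apply alg_int_pow; exact hal)) as [u [v [w huvw]]].
simpl in huvw. injection huvw as ha hb hc.
have hw : IZR w = INR d * Q2R (c n) by (rewrite hc; field; exact hd0).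
have hv : IZR v = INR d * Q2R (b n) by (rewrite hb; field; exact hd0).
have hu' : IZR u = INR d * Q2R (a n) by (rewrite ha; field; exact hd0).
set (de := dl3 theta (tn n)) in *.
set (ee := ep3 theta pR (tn n)) in *.
have hde : de = Q2R (b n) - Q2R (c n) * theta by reflexivity.
have hee : ee = Q2R (a n) + pR * Q2R (c n) - Q2R (c n) * theta ^ 2 by reflexivity.
destruct hpZ as [pz hpz].
have [z2 hz2] : isZ (3 * intR A * IZR v - 3 * intR A * intR B * IZR w) by zsolve.
have [z3 hz3] : isZ (IZR u + IZR pz * IZR w) by zsolve.
have [z4 hz4] : isZ (IZR u + IZR pz * IZR w - 2 * intR B * IZR v + intR B * intR B * IZR w) by zsolve.
have e1 : k n * theta = IZR v + (- (INR d * de)).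
{ rewrite hde hv /k. ring. }
have e2 : l n * alpha = IZR z2 + (- (3 * intR A * (INR d * de))).
{ rewrite -hz2 hde hv hw /l /k /theta. ring. }
have e3 : k n * theta ^ 2 = IZR z3 + (- (INR d * ee)).
{ rewrite -hz3 hee hu' hw -hpz /k. ring. }
have e4 : l n * alpha ^ 2 = IZR z4 + (- (INR d * ee) + 2 * intR B * (INR d * de)).
{ rewrite -hz4 hde hee hu' hv hw -hpz /l /k. rewrite /pR /theta. ring. }
have hY : INR d * Rabs de * (4 * Dp) < 1.
{ have : Rabs de * (INR d * 4 * Dp) < eta * (INR d * 4 * Dp).
  { apply Rmult_lt_compat_r; [nra|exact hdl]. }
  have -> : eta * (INR d * 4 * Dp) = 1 by (unfold eta; field; split; lra).
  intro h; nra. }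
have hZ : INR d * Rabs ee * (4 * Dp) < 1.
{ have : Rabs ee * (INR d * 4 * Dp) < eta * (INR d * 4 * Dp).
  { apply Rmult_lt_compat_r; [nra|exact hep]. }
  have -> : eta * (INR d * 4 * Dp) = 1 by (unfold eta; field; split; lra).
  intro h; nra. }
have hYp : 0 <= INR d * Rabs de by (apply Rmult_le_pos; [lra|apply Rabs_pos]).
have hZp : 0 <= INR d * Rabs ee by (apply Rmult_le_pos; [lra|apply Rabs_pos]).
have hBp := Rabs_pos (intR B).
have a1 : Rabs (- (INR d * de)) < / 2.
{ rewrite Rabs_Ropp Rabs_mult (Rabs_right (INR d)); [nra|lra]. }
have a2 : Rabs (- (3 * intR A * (INR d * de))) < / 2.
{ rewrite Rabs_Ropp Rabs_mult (Rabs_right (3 * intR A)); [|lra].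
  rewrite Rabs_mult (Rabs_right (INR d)); [|lra].
  have : 3 * intR A <= Dp by (unfold Dp; lra). nra. }
have a3 : Rabs (- (INR d * ee)) < / 2.
{ rewrite Rabs_Ropp Rabs_mult (Rabs_right (INR d)); [nra|lra]. }
have a4 : Rabs (- (INR d * ee) + 2 * intR B * (INR d * de)) < / 2.
{ eapply Rle_lt_trans. apply Rabs_triang.
  rewrite Rabs_Ropp !Rabs_mult (Rabs_right (INR d)); [|lra].
  rewrite (Rabs_right 2); [|lra].
  have : 1 + 2 * Rabs (intR B) <= Dp by (unfold Dp; lra). nra. }
rewrite e1 e2 e3 e4 !small_shift //. split; ring.
Qed.
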